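(* Consider a homogeneous linear Cauchy elastic body with elasticity matrix $C_{\alpha\beta}=c_{\alpha\beta}+b_{\alpha\beta}$ ($c$ symmetric, $b$ antisymmetric) undergoing a homogeneous displacement-controlled deformation in which, for fixed indices $\xi\neq\eta$ in $\{1,\dots,6\}$, the only nonzero Voigt strains are $$\epsilon_\xi(t)=\mathring\epsilon_\xi\sin\frac{\pi k_\xi t}{t_0},\qquad \epsilon_\eta(t)=\mathring\epsilon_\eta\sin\frac{\pi k_\eta t}{t_0},\qquad t\in[0,t_0],$$ where $\mathring\epsilon_\xi,\mathring\epsilon_\eta$ are constants and $k_\xi,k_\eta$ are positive integers with $k_\xi+k_\eta$ odd. This path $\Gamma_{\xi\eta}$ is closed in strain space, and the net stress-work density is $$w(\Gamma_{\xi\eta})=\frac{4k_\xi k_\eta\,\mathring\epsilon_\xi\mathring\epsilon_\eta}{k_\eta^2-k_\xi^2}\,b_{\xi\eta};$$ hence $b_{\xi\eta}=\dfrac{k_\eta^2-k_\xi^2}{4k_\xi k_\eta\mathring\epsilon_\xi\mathring\epsilon_\eta}\,w(\Gamma_{\xi\eta})$ whenever $\mathring\epsilon_\xi\mathring\epsilon_\eta\neq0$.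
   Context: Linear Cauchy elasticity: $\sigma_{ab}=\mathsf C_{abcd}\epsilon_{cd}$ with minor symmetries but not necessarily the major symmetry. In Voigt notation $(11,22,33,23,31,12)\leftrightarrow(1,\dots,6)$, $\sigma_\alpha=\sum_{\beta=1}^6C_{\alpha\beta}\epsilon_\beta$ with $C_{\alpha\beta}=c_{\alpha\beta}+b_{\alpha\beta}$, $c_{\alpha\beta}=c_{\beta\alpha}$, $b_{\alpha\beta}=-b_{\beta\alpha}$ (the antisymmetric elastic constants). For a homogeneous strain history $\epsilon_\alpha(t)$, $t\in[0,t_0]$, forming a closed path $\Gamma$ in strain space, the net stress-work density is $w(\Gamma)=\int_0^{t_0}\sum_{\alpha,\beta=1}^6C_{\alpha\beta}\,\epsilon_\beta(t)\,\dot\epsilon_\alpha(t)\,dt$. *)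

(* Defs.v *)
(* Voigt indices are 0..5 (paper's 1..6). *)
From Stdlib Require Import Reals Lra Lia Arith.
From Coquelicot Require Import Coquelicot.
Open Scope R_scope.

Definition voigt_sum (f : nat -> nat -> R) : R :=
  sum_n (fun a => sum_n (fun b => f a b) 5) 5.

Definition stress_work (C : nat -> nat -> R) (eps : nat -> R -> R) (t0 : R) : R :=
  RInt (fun t => voigt_sum (fun a b => C a b * eps b t * Derive (eps a) t)) 0 t0.

Definition sine_path (xi eta : nat) (exi eeta : R) (kxi keta : nat) (t0 : R)
  : nat -> R -> R :=
  fun a t =>
    if Nat.eqb a xi then exi * sin (PI * INR kxi * t / t0)
    else if Nat.eqb a eta then eeta * sin (PI * INR keta * t / t0)
    else 0.

(* Main.v *)
Require Import Defs.
From Stdlib Require Import Reals Lra Lia.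
From Coquelicot Require Import Coquelicot.
Open Scope R_scope.

Lemma sin_nPI n : sin (INR n * PI) = 0.
Proof.
induction n. simpl. rewrite Rmult_0_l; apply sin_0.
rewrite S_INR, Rmult_plus_distr_r, Rmult_1_l, sin_plus, IHn, sin_PI. ring.
Qed.

Lemma cos_nPI n : cos (INR n * PI) = (-1)^n.
Proof.
induction n. simpl. rewrite Rmult_0_l; apply cos_0.
rewrite S_INR, Rmult_plus_distr_r, Rmult_1_l, cos_plus, IHn, sin_PI, cos_PI. simpl. ring.
Qed.

Lemma Derive_sin_path (e k t0 t : R) : t0 <> 0 ->
  Derive (fun t => e * sin (PI * k * t / t0)) t = e * (PI * k / t0) * cos (PI * k * t / t0).
Proof.
intro H. apply is_derive_unique. auto_derive. auto. unfold Rdiv. ring.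
Qed.

Lemma sum6 (f : nat -> R) : sum_n f 5 = f 0%nat + f 1%nat + f 2%nat + f 3%nat + f 4%nat + f 5%nat.
Proof. rewrite sum_n_Reals. simpl. ring. Qed.
Theorem mainTheorem8
  (c b : nat -> nat -> R)
  (hc : forall a bb, (a < 6)%nat -> (bb < 6)%nat -> c a bb = c bb a)
  (hb : forall a bb, (a < 6)%nat -> (bb < 6)%nat -> b a bb = - b bb a)
  (xi eta : nat) (hxi : (xi < 6)%nat) (heta : (eta < 6)%nat) (hne : xi <> eta)
  (exi eeta : R) (kxi keta : nat) (hkxi : (0 < kxi)%nat) (hketa : (0 < keta)%nat)
  (hodd : Nat.odd (kxi + keta) = true)
  (t0 : R) (ht0 : 0 < t0) :
  let eps := sine_path xi eta exi eeta kxi keta t0 in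
  let w := stress_work (fun a bb => c a bb + b a bb) eps t0 in
  (forall a, eps a 0 = eps a t0) /\
  w = 4 * INR kxi * INR keta * exi * eeta / (INR keta ^ 2 - INR kxi ^ 2) * b xi eta /\
  (exi * eeta <> 0 ->
   b xi eta = (INR keta ^ 2 - INR kxi ^ 2) / (4 * INR kxi * INR keta * exi * eeta) * w).
Proof.
  intros eps w.
  assert (Ht0 : t0 <> 0) by lra.
  assert (Hneq : kxi <> keta).
  { intro E. subst. apply Nat.odd_spec in hodd. destruct hodd as [m Hm]. lia. }
  assert (Hp : 0 < INR kxi) by (apply lt_0_INR; lia).
  assert (Hq : 0 < INR keta) by (apply lt_0_INR; lia).
  assert (Hpq : INR keta ^ 2 - INR kxi ^ 2 <> 0).
  { replace (INR keta ^ 2 - INR kxi ^ 2) with ((INR keta - INR kxi) * (INR keta + INR kxi)) by ring.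
    apply Rmult_integral_contrapositive. split; [|lra].
    intro E. apply Hneq. apply INR_eq. lra. }
  assert (Hm1 : cos (INR kxi * PI) * cos (INR keta * PI) = -1).
  { rewrite !cos_nPI, <- pow_add. apply Nat.odd_spec in hodd. destruct hodd as [m Hm].
    rewrite Hm. replace (2 * m + 1)%nat with (S (2 * m)) by lia. apply pow_1_odd. }
  assert (Hsin : forall k : nat, sin (PI * INR k * t0 / t0) = 0).
  { intro k. replace (PI * INR k * t0 / t0) with (INR k * PI) by (field; auto). apply sin_nPI. }
  assert (Hcos : forall k : nat, cos (PI * INR k * t0 / t0) = cos (INR k * PI)).
  { intro k. replace (PI * INR k * t0 / t0) with (INR k * PI) by (field; auto). reflexivity. }
  assert (H0 : forall k : nat, PI * INR k * 0 / t0 = 0).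
  { intro k. field. auto. }
  assert (Hbxx : forall a, (a < 6)%nat -> b a a = 0).
  { intros a Ha. specialize (hb a a Ha Ha). lra. }
  assert (Hw : w = 4 * INR kxi * INR keta * exi * eeta / (INR keta ^ 2 - INR kxi ^ 2) * b xi eta).
  { set (p := INR kxi) in *. set (q := INR keta) in *.
    pose (sx := fun t => sin (PI * p * t / t0)). pose (cx := fun t => cos (PI * p * t / t0)).
    pose (se := fun t => sin (PI * q * t / t0)). pose (ce := fun t => cos (PI * q * t / t0)).
    pose (ax := PI * p / t0). pose (ae := PI * q / t0).
    pose (g := fun t =>
      (c xi xi + b xi xi) * (exi * sx t) * (exi * ax * cx t)
      + (c eta eta + b eta eta) * (eeta * se t) * (eeta * ae * ce t)
      + (c xi eta + b xi eta) * (eeta * se t) * (exi * ax * cx t)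
      + (c eta xi + b eta xi) * (exi * sx t) * (eeta * ae * ce t)).
    assert (Hg : forall t, voigt_sum (fun a bb => (c a bb + b a bb) * eps bb t * Derive (eps a) t) = g t).
    { intro t.
      assert (HD : forall a, Derive (eps a) t = if a =? xi then exi * ax * cx t
                   else if a =? eta then eeta * ae * ce t else 0).
      { intro a. unfold eps, sine_path. destruct (a =? xi).
        - apply Derive_sin_path; auto.
        - destruct (a =? eta). apply Derive_sin_path; auto. apply Derive_const. }
      unfold voigt_sum. rewrite sum6. cbv beta. rewrite !sum6. rewrite !HD.
      unfold eps, sine_path, g, sx, se, cx, ce. fold p q.
      destruct xi as [|[|[|[|[|[|xi]]]]]]; try lia; destruct eta as [|[|[|[|[|[|eta]]]]]]; try lia;
        cbn [Nat.eqb]; ring. }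
    pose (F := fun t => (-(p^2+q^2) * sx t * se t - 2 * p * q * cx t * ce t) / (q^2 - p^2)).
    pose (G := fun t => (c xi xi) * exi^2 / 2 * (sx t)^2 + c eta eta * eeta^2/2 * (se t)^2
       + c xi eta * exi * eeta * sx t * se t + b xi eta * exi * eeta * F t).
    unfold w, stress_work.
    rewrite (RInt_ext _ g) by (intros; apply Hg).
    assert (HI : is_RInt g 0 t0 (minus (G t0) (G 0))).
    { apply (@is_RInt_derive R_CompleteNormedModule).
      - intros x _. unfold g. rewrite (hc eta xi heta hxi), (hb eta xi heta hxi), (Hbxx xi hxi), (Hbxx eta heta).
        unfold G, F, ax, ae, sx, se, cx, ce. auto_derive. auto.
        unfold Rdiv. field. split; auto. replace (q*q-p*p) with (q^2-p^2) by ring; exact Hpq.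
      - intros x _. assert (Hd : ex_derive g x) by (unfold g, sx, se, cx, ce; auto_derive; auto). exact (ex_derive_continuous g x Hd). }
    rewrite (is_RInt_unique _ _ _ _ HI).
    unfold minus, plus, opp. simpl. unfold G, F, sx, se, cx, ce.
    assert (S1 : sin (PI*p*t0/t0) = 0) by apply Hsin.
    assert (S2 : sin (PI*q*t0/t0) = 0) by apply Hsin.
    assert (C1 : cos (PI*p*t0/t0) = cos (p*PI)) by apply Hcos.
    assert (C2 : cos (PI*q*t0/t0) = cos (q*PI)) by apply Hcos.
    assert (Z1 : PI*p*0/t0 = 0) by apply H0.
    assert (Z2 : PI*q*0/t0 = 0) by apply H0.
    rewrite S1, S2, C1, C2, Z1, Z2, sin_0, cos_0.
    replace (cos (p * PI)) with (-1 / cos (q * PI)).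
    2:{ assert (cos (q*PI) <> 0) by (intro E; rewrite E in Hm1; lra). rewrite <- Hm1. field. auto. }
    assert (cos (q*PI) <> 0) by (intro E; rewrite E in Hm1; lra).
    field. split; auto. replace (q*q-p*p) with (q^2-p^2) by ring; exact Hpq. }
  split; [|split; [exact Hw|]].
  - intro a. unfold eps, sine_path. rewrite !H0, !Hsin, sin_0.
    destruct (a =? xi); [|destruct (a =? eta)]; ring.
  - intro Hne. rewrite Hw.
    assert (exi <> 0) by (intro E; apply Hne; rewrite E; ring).
    assert (eeta <> 0) by (intro E; apply Hne; rewrite E; ring).
    field. repeat split; auto; lra.
Qed.
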